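(* Let $E$ be a finite set, $\tau:2^E\to 2^E$, $A\subseteq E$ and $x\in A$. If $(E,\tau)$ is a violator space, then $x\in ex(A)$ if and only if $\tau(A)\neq\tau(A-\{x\})$. If $(E,\tau)$ is a convex space, then $x\in ex(A)$ implies $\tau(A)\neq\tau(A-\{x\})$.
   Context: $(E,\tau)$ is a violator space if (C1) $X\subseteq\tau(X)$ for all $X$, and (C22) $F\subseteq G\subseteq\tau(F)$ implies $\tau(G)=\tau(F)$. $(E,\tau)$ is a convex space if (C1) holds and (convexity) for all $X\subseteq Y\subseteq Z\subseteq E$ with $\tau(X)=\tau(Z)$ we have $\tau(Y)=\tau(X)$. An element $x\in A$ is an extreme point of $A$ if $x\notin\tau(A-\{x\})$; $ex(A)$ denotes the set of extreme points of $A$. *)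

(* Defs.v *)
From mathcomp Require Import all_boot.
Set Implicit Arguments. Unset Strict Implicit. Unset Printing Implicit Defensive.

Definition extensive (E : finType) (tau : {set E} -> {set E}) : Prop :=
  forall X : {set E}, X \subset tau X.

Definition C22 (E : finType) (tau : {set E} -> {set E}) : Prop :=
  forall F G : {set E}, F \subset G -> G \subset tau F -> tau G = tau F.

Definition violator_space (E : finType) (tau : {set E} -> {set E}) : Prop :=
  extensive tau /\ C22 tau.

Definition convexity (E : finType) (tau : {set E} -> {set E}) : Prop :=
  forall X Y Z : {set E}, X \subset Y -> Y \subset Z -> tau X = tau Z -> tau Y = tau X.

Definition convex_space (E : finType) (tau : {set E} -> {set E}) : Prop :=
  extensive tau /\ convexity tau.

Definition ex (E : finType) (tau : {set E} -> {set E}) (A : {set E}) : {set E} :=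
  [set x in A | x \notin tau (A :\ x)].

(* Main.v *)
Require Import Defs.
From mathcomp Require Import all_boot.

Lemma ex_neq (E : finType) (tau : {set E} -> {set E}) (A : {set E}) (x : E) :
  extensive tau -> x \in A -> x \in ex tau A -> tau A <> tau (A :\ x).
Proof.
move=> Hext hx; rewrite inE => /andP [_ Hn] Heq.
move/negP: Hn; apply; rewrite -Heq; exact: (subsetP (Hext A)).
Qed.

Theorem mainTheorem11 (E : finType) (tau : {set E} -> {set E}) (A : {set E}) (x : E)
  (hx : x \in A) :
  (violator_space tau -> (x \in ex tau A <-> tau A <> tau (A :\ x))) /\
  (convex_space tau -> x \in ex tau A -> tau A <> tau (A :\ x)).
Proof.
split.
- move=> [Hext HC]; split; first exact: ex_neq.
  move=> Hne; rewrite inE hx /=; apply/negP => Hin; apply: Hne.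
  apply: HC; first exact: subsetDl.
  apply/subsetP => y Hy; case: (eqVneq y x) => [->//|Hyx].
  apply: (subsetP (Hext (A :\ x))); rewrite !inE Hyx; exact: Hy.
- move=> [Hext _]; exact: ex_neq.
Qed.
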